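(* Let $\mathcal{G}=(\mathfrak{g},[\cdot,\ldots,\cdot],\varepsilon,\alpha)$ be a multiplicative $n$-Hom-Lie color algebra. For each integer $p\geq 1$, the $p$th derived algebra $\mathcal{G}^p=(\mathfrak{g},[\cdot,\ldots,\cdot]^p,\varepsilon,\alpha^{2p})$, where $[\cdot,\ldots,\cdot]^p=\alpha^{2p-1}\circ[\cdot,\ldots,\cdot]$, is an $n$-Hom-Lie color algebra (and $\mathcal{G}^0:=\mathcal{G}$).
   Context: $\mathbb{K}$ is a field of characteristic zero and $\Gamma$ an abelian group. A bicharacter is a map $\varepsilon:\Gamma\times\Gamma\to\mathbb{K}\setminus\{0\}$ with $\varepsilon(a,b)\varepsilon(b,a)=1$, $\varepsilon(a,b+c)=\varepsilon(a,b)\varepsilon(a,c)$, $\varepsilon(a+b,c)=\varepsilon(a,c)\varepsilon(b,c)$. For homogeneous $x,y$, $\varepsilon(x,y)=\varepsilon(|x|,|y|)$ and $\varepsilon(x,y_1+\dots+y_k)=\varepsilon(|x|,|y_1|+\dots+|y_k|)$ ($=1$ for an empty sum). An $n$-Hom-Lie color algebra $(\mathfrak{g},[\cdot,\ldots,\cdot],\varepsilon,\alpha)$ is a $\Gamma$-graded vector space with an $n$-linear bracket of degree zero, a bicharacter $\varepsilon$ and a degree-zero linear map $\alpha$ such that for homogeneous elements: (i) $[x_1,\ldots,x_i,x_{i+1},\ldots,x_n]=-\varepsilon(x_i,x_{i+1})[x_1,\ldots,x_{i+1},x_i,\ldots,x_n]$; (ii) $[\alpha(x_1),\ldots,\alpha(x_{n-1}),[y_1,\ldots,y_n]]=\sum_{i=1}^n\varepsilon(x_1+\dots+x_{n-1},y_1+\dots+y_{i-1})[\alpha(y_1),\ldots,\alpha(y_{i-1}),[x_1,\ldots,x_{n-1},y_i],\alpha(y_{i+1}),\ldots,\alpha(y_n)]$.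 It is multiplicative if $\alpha([x_1,\ldots,x_n])=[\alpha(x_1),\ldots,\alpha(x_n)]$. *)

(* Defs.v *)
From HB Require Import structures.
From mathcomp Require Import all_boot all_order all_algebra.
Set Implicit Arguments. Unset Strict Implicit. Unset Printing Implicit Defensive.
Import GRing.Theory.
Local Open Scope ring_scope.

Section NHomLieColor.
Variables (K : fieldType) (Gam : zmodType) (V : lmodType K).

(* A Gam-grading of V: G a x means "x is homogeneous of degree a", i.e. x \in V_a.
   V = (+)_a V_a : each V_a is a subspace, every vector is a finite sum of
   homogeneous components of pairwise distinct degrees, and such sums are direct. *)
Definition is_grading (G : Gam -> V -> Prop) : Prop :=
  [/\ forall a, G a 0,
      forall a (k : K) x y, G a x -> G a y -> G a (k *: x + y),
      forall x : V, exists s : seq (Gam * V),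
        [/\ uniq (map fst s), (forall q, q \in s -> G q.1 q.2) &
            x = \sum_(q <- s) q.2]
    & forall s : seq (Gam * V),
        uniq (map fst s) -> (forall q, q \in s -> G q.1 q.2) ->
        \sum_(q <- s) q.2 = 0 -> forall q, q \in s -> q.2 = 0].

Definition bicharacter (eps : Gam -> Gam -> K) : Prop :=
  [/\ forall a b, eps a b != 0,
      forall a b, eps a b * eps b a = 1,
      forall a b c, eps a (b + c) = eps a b * eps a c
    & forall a b c, eps (a + b) c = eps a c * eps b c].

Definition upd N (t : {ffun 'I_N -> V}) (i : 'I_N) (v : V) : {ffun 'I_N -> V} :=
  [ffun j => if j == i then v else t j].

Definition swap_entries N (t : {ffun 'I_N -> V}) (i j : 'I_N) : {ffun 'I_N -> V} :=
  [ffun k => if k == i then t j else if k == j then t i else t k].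

(* the n-tuple (x_1, ..., x_{n-1}, v), with n = m.+1 *)
Definition ext m (x : {ffun 'I_m -> V}) (v : V) : {ffun 'I_m.+1 -> V} :=
  [ffun k => match unlift ord_max k with Some j => x j | None => v end].

(* n-Hom-Lie color algebra of arity n = m.+1 (the Hom-Jacobi identity involves
   n-1 = m elements x and n elements y). *)
Definition nHomLieColor m (G : Gam -> V -> Prop) (br : {ffun 'I_m.+1 -> V} -> V)
    (eps : Gam -> Gam -> K) (alpha : V -> V) : Prop :=
  is_grading G /\
      bicharacter eps /\
      (forall (t : {ffun 'I_m.+1 -> V}) i (k : K) x y,
          br (upd t i (k *: x + y)) = k *: br (upd t i x) + br (upd t i y)) /\
      (forall (d : 'I_m.+1 -> Gam) (t : {ffun 'I_m.+1 -> V}),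
          (forall i, G (d i) (t i)) -> G (\sum_i d i) (br t)) /\
      (forall (k : K) x y, alpha (k *: x + y) = k *: alpha x + alpha y) /\
      (forall a x, G a x -> G a (alpha x)) /\
      (forall (d : 'I_m.+1 -> Gam) (t : {ffun 'I_m.+1 -> V}),
          (forall i, G (d i) (t i)) ->
          forall i j : 'I_m.+1, nat_of_ord j = (nat_of_ord i).+1 ->
          br t = - eps (d i) (d j) *: br (swap_entries t i j)) /\
      (forall (dx : 'I_m -> Gam) (x : {ffun 'I_m -> V})
              (dy : 'I_m.+1 -> Gam) (y : {ffun 'I_m.+1 -> V}),
          (forall i, G (dx i) (x i)) -> (forall i, G (dy i) (y i)) ->
          br (ext [ffun k => alpha (x k)] (br y)) =
          \sum_(i < m.+1)
             eps (\sum_(k < m) dx k) (\sum_(j < m.+1 | (j < i)%N) dy j) *: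
             br [ffun j => if j == i then br (ext x (y i)) else alpha (y j)]).

Definition multiplicative m (br : {ffun 'I_m.+1 -> V} -> V) (alpha : V -> V) : Prop :=
  forall t, alpha (br t) = br [ffun k => alpha (t k)].

End NHomLieColor.

(* Main.v *)
Require Import Defs.
From HB Require Import structures.
From mathcomp Require Import all_boot all_order all_algebra.
Local Open Scope ring_scope.
Section Aux.
Import GRing.Theory.
Variables (K : fieldType) (Gam : zmodType) (V : lmodType K).
Variable alpha : V -> V.
Hypothesis lin : forall (k : K) x y, alpha (k *: x + y) = k *: alpha x + alpha y.

Lemma iter_lin n (k : K) x y :
  iter n alpha (k *: x + y) = k *: iter n alpha x + iter n alpha y.
Proof. by elim: n => [|n IH] //=; rewrite IH lin. Qed.

Lemma iter0 n : iter n alpha 0 = 0.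
Proof.
have := iter_lin n (-1) 0 0.
by rewrite scaler0 addr0 scaleN1r addNr.
Qed.

Lemma iterD n x y : iter n alpha (x + y) = iter n alpha x + iter n alpha y.
Proof. by have := iter_lin n 1 x y; rewrite !scale1r. Qed.

Lemma iterZ n (k : K) x : iter n alpha (k *: x) = k *: iter n alpha x.
Proof. by have := iter_lin n k x 0; rewrite !addr0 iter0 addr0. Qed.

Lemma iter_sum n (I : Type) (r : seq I) (P : pred I) (F : I -> V) :
  iter n alpha (\sum_(i <- r | P i) F i) = \sum_(i <- r | P i) iter n alpha (F i).
Proof.
elim/big_rec2: _ => [|i y1 y2 _ <-]; first exact: iter0.
exact: iterD.
Qed.

Variable m : nat.
Variable br : {ffun 'I_m.+1 -> V} -> V.
Hypothesis mult : Defs.multiplicative br alpha.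

Lemma iter_mult n t : iter n alpha (br t) = br [ffun k => iter n alpha (t k)].
Proof.
elim: n => [|n IH] /=.
  by congr br; apply/ffunP => k; rewrite ffunE.
rewrite IH mult; congr br; apply/ffunP => k; rewrite !ffunE.
by [].
Qed.

Lemma ext_map (f : V -> V) (x : {ffun 'I_m -> V}) v :
  [ffun k => f (ext x v k)] = ext [ffun k => f (x k)] (f v).
Proof.
apply/ffunP => k; rewrite !ffunE.
by case: unlift => //= j; rewrite ffunE.
Qed.

End Aux.
Arguments iter_lin {K V alpha} lin n k x y.
Arguments iterZ {K V alpha} lin n k x.
Arguments iter_sum {K V alpha} lin n {I} r P F.
Arguments iter_mult {K V alpha m br} mult n t.
Arguments ext_map {K V m} f x v.

Theorem corollary3p4 (K : fieldType) (Gam : zmodType) (V : lmodType K) (m : nat)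
    (G : Gam -> V -> Prop) (br : {ffun 'I_m.+1 -> V} -> V)
    (eps : Gam -> Gam -> K) (alpha : V -> V) :
  [pchar K] =i pred0 ->
  nHomLieColor G br eps alpha ->
  multiplicative br alpha ->
  forall p : nat, (1 <= p)%N ->
  nHomLieColor G (fun t => iter (2 * p).-1 alpha (br t)) eps (iter (2 * p) alpha).
Proof.
move=> _ [gr [bich [brlin [brdeg [alin [adeg [skew jac]]]]]]] mult p hp.
have h : (2 * p)%N = ((2 * p).-1).+1 by rewrite prednK // muln_gt0.
rewrite [in iter (2 * p) alpha]h.
move: ((2 * p).-1) => q.
have itdeg : forall n a x, G a x -> G a (iter n alpha x).
  by move=> n a x Gx; elim: n => [|n IH] //=; apply: adeg.
split; first exact: gr.
split; first exact: bich.
split.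
  by move=> t i k x y; rewrite brlin (iter_lin alin).
split.
  by move=> d t Ht; apply: itdeg; apply: brdeg.
split.
  by move=> k x y; rewrite iter_lin.
split.
  by move=> a x Gx; apply: itdeg.
split.
  by move=> d t Ht i j hij; rewrite (skew d t Ht i j hij) (iterZ alin).
move=> dx x dy y Hx Hy.
rewrite (iter_mult mult q y).
set x' := [ffun k => iter q alpha (x k)].
set y' := [ffun k => iter q alpha (y k)].
have -> : [ffun k => iter q.+1 alpha (x k)] = [ffun k => alpha (x' k)].
  by apply/ffunP => k; rewrite !ffunE.
rewrite (jac dx x' dy y'); last first.
- by move=> i; rewrite ffunE; apply: itdeg.
- by move=> i; rewrite ffunE; apply: itdeg.
rewrite (iter_sum alin); apply: eq_bigr => i _.
rewrite (iterZ alin); congr (_ *: iter q alpha (br _)).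
apply/ffunP => j; rewrite !ffunE; case: ifP => _.
  by rewrite (iter_mult mult) ext_map.
by rewrite ?ffunE.
Qed.
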